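(* Let $\mathsf{T}$ be a rooted plane tree, let $\delta\in\mathcal{O}(\mathsf{T})$, and suppose $v$ wraps $u$ in $\delta$. Then the map $\delta_u^v\colon\mathsf{T}\to 2^{\mathsf{T}}$ defined by $\delta_u^v(v)=\delta(v)\setminus\Delta_{\delta(v)}(u)$ and $\delta_u^v(w)=\delta(w)$ for $w\neq v$ is an ornamentation of $\mathsf{T}$.
   Context: A rooted plane tree $\mathsf{T}$ is a finite tree with a distinguished root, regarded as a poset $\leq_\mathsf{T}$ in which $v'\leq_\mathsf{T} v$ iff $v$ lies on the path from $v'$ to the root. An ornament is a nonempty set of nodes inducing a connected subgraph. For a set $S$ of nodes and $u\in S$, $\Delta_S(u)=\{w\in S:w\leq_\mathsf{T} u\}$. An ornamentation is a map $\delta$ from $\mathsf{T}$ to ornaments such that the unique maximal element of $\delta(v)$ is $v$ and any two sets $\delta(v),\delta(v')$ are nested or disjoint; $\mathcal{O}(\mathsf{T})$ is the set of ornamentations. For distinct nodes $u,v$, we say $v$ wraps $u$ in $\delta$ if $\delta(u)\subseteq\delta(v)$ and there is no node $w$ with $\delta(u)\subsetneq\delta(w)\subsetneq\delta(v)$. *)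

(* Defs.v *)
From mathcomp Require Import all_boot.
Set Implicit Arguments. Unset Strict Implicit. Unset Printing Implicit Defensive.

Section Tree.
Variables (T : finType) (r : T) (par : T -> T).

(* child -> parent edge; the root has no parent *)
Definition up_edge : rel T := fun a b => (a != r) && (par a == b).

Definition rooted_tree : Prop := forall x : T, connect up_edge x r.

Definition tle (x y : T) : bool := connect up_edge x y.
Definition tlt (x y : T) : bool := (x != y) && tle x y.

Definition adj : rel T := fun a b => up_edge a b || up_edge b a.

Definition induced_connected (S : {set T}) : Prop :=
  forall x y, x \in S -> y \in S ->
    connect (fun a b => [&& a \in S, b \in S & adj a b]) x y.

Definition ornament (S : {set T}) : Prop := S != set0 /\ induced_connected S.

Definition maximal_in (S : {set T}) (x : T) : bool :=
  (x \in S) && [forall y, (y \in S) ==> ~~ tlt x y].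

Definition Delta (S : {set T}) (u : T) : {set T} := [set w in S | tle w u].

Definition ornamentation (delta : T -> {set T}) : Prop :=
  (forall v, ornament (delta v)) /\
  (forall v, maximal_in (delta v) v /\
             forall x, maximal_in (delta v) x -> x = v) /\
  (forall v v', [|| delta v \subset delta v', delta v' \subset delta v
                  | [disjoint delta v & delta v']]).

Definition wraps (delta : T -> {set T}) (v u : T) : Prop :=
  u != v /\ delta u \subset delta v /\
  ~ (exists w, (delta u \proper delta w) && (delta w \proper delta v)).

Definition delta_uv (delta : T -> {set T}) (u v : T) : T -> {set T} :=
  fun w => if w == v then delta v :\: Delta (delta v) u else delta w.

End Tree.

(* Main.v *)
Require Import Defs.
From mathcomp Require Import all_boot.
Set Implicit Arguments. Unset Strict Implicit. Unset Printing Implicit Defensive.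

Definition fpar (T : finType) (r : T) (par : T -> T) (a : T) : T :=
  if a == r then r else par a.

Lemma tle_iter (T : finType) (r : T) (par : T -> T) x y :
  tle r par x y -> exists n, iter n (fpar r par) x = y.
Proof.
move=> /connectP [p]; elim: p x => [|b p IH] x /=.
  by move=> _ ->; exists 0.
case/andP=> /andP [xr /eqP xb] pp yl.
have [n hn] := IH b pp yl; exists n.+1.
by rewrite iterSr /fpar (negbTE xr) xb.
Qed.

Lemma iter_tle (T : finType) (r : T) (par : T -> T) n x :
  tle r par x (iter n (fpar r par) x).
Proof.
elim: n => [|n IH] /=; first exact: connect0.
apply: (connect_trans IH); rewrite /fpar.
case: eqP => [->|/eqP ne]; first exact: connect0.
by apply: connect1; rewrite /up_edge ne eqxx.
Qed.

Lemma tle_trans (T : finType) (r : T) (par : T -> T) x y z :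
  tle r par x y -> tle r par y z -> tle r par x z.
Proof. exact: connect_trans. Qed.

Lemma tle_refl (T : finType) (r : T) (par : T -> T) x : tle r par x x.
Proof. exact: connect0. Qed.

Lemma tle_edge (T : finType) (r : T) (par : T -> T) x :
  x != r -> tle r par x (par x).
Proof. by move=> ne; apply: connect1; rewrite /up_edge ne eqxx. Qed.

Lemma tle_step (T : finType) (r : T) (par : T -> T) a x :
  tle r par a x -> a = x \/ (a != r /\ tle r par (par a) x).
Proof.
move=> /connectP [[|b p]] /=; first by move=> _ ->; left.
case/andP=> /andP [ar /eqP ab] pp yl; right; split=> //.
by apply/connectP; exists p; rewrite ab.
Qed.

Lemma tle_antisym (T : finType) (r : T) (par : T -> T) x y :
  rooted_tree r par -> tle r par x y -> tle r par y x -> x = y.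
Proof.
move=> rt /tle_iter [a ha] /tle_iter [b hb].
have [N hN] := tle_iter (rt x).
set f := fpar r par in ha hb hN.
have fr : f r = r by rewrite /f /fpar eqxx.
have cyc : iter (b + a) f x = x by rewrite iterD ha hb.
have cycK : forall k, iter ((b + a) * k) f x = x.
  elim=> [|k IH]; first by rewrite muln0. by rewrite mulnS iterD IH cyc.
case: (posnP (b + a)) => [/eqP|pos].
  by rewrite addn_eq0 => /andP [_ /eqP a0]; move: ha; rewrite a0.
have le : N <= (b + a) * N by rewrite leq_pmull.
have xr : x = r.
  by rewrite -(cycK N) -(subnK le) iterD hN iter_fix.
by move: ha; rewrite xr iter_fix.
Qed.

Lemma tle_lin (T : finType) (r : T) (par : T -> T) x a b :
  tle r par x a -> tle r par x b -> tle r par a b || tle r par b a.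
Proof.
move=> /tle_iter [n <-] /tle_iter [m <-].
case: (leqP n m) => h.
  by rewrite -(subnK h) iterD iter_tle.
by rewrite -(subnK (ltnW h)) iterD iter_tle orbT.
Qed.

Lemma max_no_above (T : finType) (r : T) (par : T -> T) S w y :
  maximal_in r par S w -> y \in S -> tle r par w y -> y = w.
Proof.
case/andP=> _ /forallP H yS wy; have := H y; rewrite yS /= /tlt wy andbT negbK.
by move/eqP.
Qed.

Lemma below_top (T : finType) (r : T) (par : T -> T) S w x :
  induced_connected r par S -> maximal_in r par S w -> x \in S ->
  tle r par x w.
Proof.
move=> conn mw xS; have wS : w \in S by case/andP: mw.
have /connectP [p] := conn x w xS wS.
elim: p x xS => [|b p IH] x xS /=; first by move=> _ ->; apply: tle_refl.
case/andP=> /and3P [_ bS adjxb] pp wl; have bw := IH b bS pp wl.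
case/orP: adjxb => /andP [ne /eqP e].
  by apply: tle_trans bw; rewrite -e; apply: tle_edge.
case: (tle_step bw) => [bw'|[_ h]]; last by rewrite -e.
subst b; rewrite -e; suff -> : par w = w by apply: tle_refl.
apply: (max_no_above mw); rewrite ?e // -e; exact: tle_edge.
Qed.

Lemma step_up (T : finType) (r : T) (par : T -> T) S w a :
  rooted_tree r par ->
  induced_connected r par S -> maximal_in r par S w -> a \in S -> a != w ->
  a != r /\ par a \in S.
Proof.
move=> rt conn mw aS aw; have wS : w \in S by case/andP: mw.
have aw' := below_top conn mw aS.
case: (tle_step aw') => [/eqP|[ar _]]; first by rewrite (negbTE aw).
split=> //.
have /connectP [p] := conn a w aS wS.
suff key : forall q c, c \in S -> tle r par c a ->
    path (fun a0 b0 : T => [&& a0 \in S, b0 \in S & adj r par a0 b0]) c q ->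
    w = last c q -> par a \in S.
  move=> pp wl; exact: (key p a aS (tle_refl r par a) pp wl).
elim=> [|b q IH] c cS /= ca.
  move=> _ wc; subst c; case/eqP: aw; exact: tle_antisym.
case/andP=> /and3P [_ bS adjcb] pp wl.
case ba: (tle r par b a); first exact: (IH b bS ba pp wl).
case/orP: adjcb => /andP [ne /eqP e].
  case: (tle_step ca) => [ca'|[_ h]]; first by rewrite -ca' e.
  by rewrite e ba in h.
by move: ba; rewrite (tle_trans _ ca) // -e tle_edge.
Qed.

Lemma up_closed (T : finType) (r : T) (par : T -> T) S w x y :
  rooted_tree r par ->
  induced_connected r par S -> maximal_in r par S w -> x \in S ->
  tle r par x y -> tle r par y w -> y \in S.
Proof.
move=> rt conn mw xS /tle_iter [n]; elim: n x xS => [|n IH] x xS /=.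
  by move=> <-.
move=> hy yw.
have [xw|xw] := eqVneq x w.
  subst x; suff -> : y = w by [].
  apply: (tle_antisym rt) => //; rewrite -hy -iterS; exact: iter_tle.
have [xr pS] := step_up rt conn mw xS xw.
have fx : fpar r par x = par x by rewrite /fpar (negbTE xr).
move: hy; rewrite -iterS iterSr fx => hy.
exact: (IH _ pS hy yw).
Qed.

Theorem lemma2p2 (T : finType) (r : T) (par : T -> T)
  (delta : T -> {set T}) (u v : T) :
  rooted_tree r par ->
  ornamentation r par delta ->
  wraps delta v u ->
  ornamentation r par (delta_uv r par delta u v).
Proof.
move=> rt [orn [maxs lam]] [uv [sub nowrap]].
set D := delta v.
set D' := D :\: Delta r par D u.
have mv : maximal_in r par D v := (maxs v).1.
have connD : induced_connected r par D := (orn v).2.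
have mu : maximal_in r par (delta u) u := (maxs u).1.
have connU : induced_connected r par (delta u) := (orn u).2.
have uU : u \in delta u by case/andP: mu.
have uD : u \in D := subsetP sub u uU.
have vD : v \in D by case/andP: mv.
have D'D : D' \subset D := subsetDl _ _.
have memD' : forall x, (x \in D') = (x \in D) && ~~ tle r par x u.
  by move=> x; rewrite /D' in_setD /Delta in_set andbC; case: (x \in D).
have vD' : v \in D'.
  rewrite memD' vD /=; apply/negP => vu.
  by case/eqP: uv; apply: (max_no_above mv uD).
have connD' : induced_connected r par D'.
  set e := fun a b : T => [&& a \in D', b \in D' & adj r par a b].
  have esym : connect_sym e.
    apply: sym_connect_sym => a b; rewrite /e /adj.
    by case: (a \in D'); case: (b \in D'); rewrite //= orbC.
  suff tov : forall x, x \in D' -> connect e x v.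
    move=> x y xD yD; apply: (connect_trans (tov x xD)).
    by rewrite esym; apply: tov.
  move=> x xD; have := below_top connD mv (subsetP D'D x xD).
  move/tle_iter=> [n]; elim: n x xD => [|n IH] x xD.
    by move=> <-; apply: connect0.
  move=> hn; have [xv|xv] := eqVneq x v; first by rewrite xv connect0.
  have [xr pD] := step_up rt connD mv (subsetP D'D x xD) xv.
  have pD' : par x \in D'.
    rewrite memD' pD /=; apply/negP => pu.
    by move: xD; rewrite memD' (tle_trans (tle_edge par xr) pu) andbF.
  have fx : fpar r par x = par x by rewrite /fpar (negbTE xr).
  move: hn; rewrite iterSr fx => hn.
  apply: (@connect_trans _ e (par x)); last exact: IH _ pD' hn.
  apply: connect1.
  by rewrite /e xD pD' /adj /up_edge xr eqxx.
have mv' : maximal_in r par D' v.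
  rewrite /maximal_in vD' /=; apply/forallP => y; apply/implyP => yD.
  by case/andP: mv => _ /forallP /(_ y) /implyP; apply; apply: (subsetP D'D).
have uniq' : forall x, maximal_in r par D' x -> x = v.
  move=> x mx; have xD : x \in D by apply: (subsetP D'D); case/andP: mx.
  have xv := below_top connD mv xD.
  apply/eqP; apply/negP => /negP xnv.
  case/andP: mx => _ /forallP /(_ v) /implyP /(_ vD').
  by rewrite /tlt xnv xv.
have lamv : forall w, w != v ->
    [|| D' \subset delta w, delta w \subset D' | [disjoint D' & delta w]].
  move=> w wv; set E := delta w.
  have mw : maximal_in r par E w := (maxs w).1.
  have connE : induced_connected r par E := (orn w).2.
  have wE : w \in E by case/andP: mw.
  case/or3P: (lam v w) => [DE|ED|dis].
  - by rewrite (subset_trans D'D DE).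
  - case: (boolP (tle r par w u)) => wu.
      apply/orP; right; apply/orP; right.
      rewrite disjoint_sym disjoint_subset; apply/subsetP => x xE.
      rewrite inE memD' negb_and negbK (tle_trans (below_top connE mw xE) wu).
      by rewrite orbT.
    case/or3P: (lam w u) => [Eu|uE|dis2].
    + by case/negP: wu; apply: (below_top connU mu); apply: (subsetP Eu).
    + have [EeqD|ne] := eqVneq E D; first by rewrite EeqD D'D.
      exfalso; apply: nowrap; exists w; rewrite !properEneq uE ED ne !andbT /=.
      apply/eqP => h; case/negP: wu; apply: (below_top connU mu).
      by rewrite h.
    + apply/orP; right; apply/orP; left.
      apply/subsetP => x xE; rewrite memD' (subsetP ED x xE) /=.
      apply/negP => xu.
      have xw := below_top connE mw xE.
      case/orP: (tle_lin xu xw) => [uw|]; last by rewrite (negbTE wu).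
      have uE := up_closed rt connE mw xE xu uw.
      by rewrite (disjointFr dis2 uE) in uU.
  - by rewrite (disjointWl D'D dis) !orbT.
rewrite /ornamentation /delta_uv; split; last split.
- move=> w; case: eqP => _; last exact: orn.
  split=> //; apply/set0Pn; by exists v.
- move=> w; case: eqP => [->|_]; last exact: maxs.
  by split.
- move=> w w'; case: (eqVneq w v) => [wv|wv].
    subst w.
    case: (eqVneq w' v) => [w'v|w'v]; first by rewrite subxx.
    exact: lamv.
  case: (eqVneq w' v) => [w'v|w'v].
    subst w'; change (delta v :\: Delta r par (delta v) u) with D'.
    case/or3P: (lamv w wv) => h; first by rewrite h orbT.
      by rewrite h.
    by rewrite disjoint_sym h !orbT.
  exact: lam.
Qed.
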